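(* Let $\alpha\ge2$ be an even integer and $\beta\ge1$ an integer. Put $\theta=1$ if $\alpha\equiv0\pmod 4$ and $\theta=2$ if $\alpha\equiv2\pmod4$. Let $\Lambda\subseteq\mathbb Z^2$ be the lattice with generator matrix $$G=\begin{pmatrix}\beta & \tfrac{\alpha}{2}+\theta\\ 0 & \alpha\end{pmatrix}.$$ Let $\mathcal S=\{0,\dots,\beta-1\}\times\{0,\dots,\alpha-1\}$ and $\delta=(+1,0)$. Then $\Lambda$ induces a lattice tiling of $\mathcal S$, and $(\Lambda,\mathcal S,\delta)$ defines a folding.
   Context: A shape is a finite nonempty set $\mathcal S\subset\mathbb Z^2$ containing the origin; the origin is its distinguished center point. A lattice is a set $\Lambda=\{u_1v_1+u_2v_2 : u_1,u_2\in\mathbb Z\}$ for linearly independent $v_1,v_2\in\mathbb Z^2$. The matrix $G$ with rows $v_1,v_2$ is a generator matrix. $\Lambda$ induces a lattice tiling of $\mathcal S$ if the translates $\mathcal S+\lambda$, $\lambda\in\Lambda$, are pairwise disjoint and cover $\mathbb Z^2$. For $x\in\mathbb Z^2$, $c(x)$ denotes the unique $\lambda\in\Lambda$ with $x\in\mathcal S+\lambda$. For a nonzero $\delta\in\{-1,0,1\}^2$, the folded-row of $(\Lambda,\mathcal S,\delta)$ is the sequence $p_0=0$, $p_{k+1}=(p_k+\delta)-c(p_k+\delta)$. The triple $(\Lambda,\mathcal S,\delta)$ defines a folding if every element of $\mathcal S$ occurs in the folded-row. *)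

(* Defs.v *)
From Stdlib Require Import ZArith.
Open Scope Z_scope.

Definition pt := (Z * Z)%type.
Definition padd (x y : pt) : pt := (fst x + fst y, snd x + snd y).
Definition psub (x y : pt) : pt := (fst x - fst y, snd x - snd y).

(* Shapes as predicates on Z^2 (finiteness/nonemptiness/origin are
   properties of the concrete shape used). *)
Definition shape := pt -> Prop.

(* The lattice generated by the rows v1, v2 of a generator matrix. *)
Definition in_lattice (v1 v2 : pt) (l : pt) : Prop :=
  exists u1 u2 : Z, l = (u1 * fst v1 + u2 * fst v2, u1 * snd v1 + u2 * snd v2).

Definition lin_indep (v1 v2 : pt) : Prop := fst v1 * snd v2 - snd v1 * fst v2 <> 0.

Definition in_translate (S : shape) (l x : pt) : Prop := S (psub x l).

Definition lattice_tiling (v1 v2 : pt) (S : shape) : Prop :=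
  forall x : pt, exists l : pt,
    (in_lattice v1 v2 l /\ in_translate S l x) /\
    forall l', in_lattice v1 v2 l' -> in_translate S l' x -> l' = l.

(* c(x) = l  (well-defined as a function when the tiling property holds). *)
Definition is_c (v1 v2 : pt) (S : shape) (x l : pt) : Prop :=
  in_lattice v1 v2 l /\ in_translate S l x.

(* p is the folded-row: p_0 = 0, p_{k+1} = (p_k + δ) - c(p_k + δ). *)
Definition is_folded_row (v1 v2 : pt) (S : shape) (d : pt) (p : nat -> pt) : Prop :=
  p O = (0, 0) /\
  forall k : nat, is_c v1 v2 S (padd (p k) d) (psub (padd (p k) d) (p (Datatypes.S k))).

Definition defines_folding (v1 v2 : pt) (S : shape) (d : pt) : Prop :=
  lattice_tiling v1 v2 S /\
  exists p : nat -> pt, is_folded_row v1 v2 S d p /\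
    forall s : pt, S s -> exists k : nat, p k = s.

Definition rect_shape (b a : Z) : shape :=
  fun x => 0 <= fst x < b /\ 0 <= snd x < a.

Definition theta (a : Z) : Z := if Z.eqb (a mod 4) 0 then 1 else 2.

(* Main.v *)
Require Import Defs.
From Stdlib Require Import ZArith Lia.
Open Scope Z_scope.

Lemma tiling_gen b a h : 0 < b -> 0 < a -> lattice_tiling (b, h) (0, a) (rect_shape b a).
Proof.
  intros Hb Ha [x1 x2].
  set (q := x1 / b). set (u2 := (x2 - q*h) / a).
  pose proof (Z.div_mod x1 b ltac:(lia)) as E1.
  pose proof (Z.mod_pos_bound x1 b Hb) as B1.
  pose proof (Z.div_mod (x2 - q*h) a ltac:(lia)) as E2.
  pose proof (Z.mod_pos_bound (x2 - q*h) a Ha) as B2.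
  fold q in E1. fold u2 in E2.
  exists (q*b + u2*0, q*h + u2*a). split.
  - split. exists q, u2. reflexivity.
    unfold in_translate, rect_shape, psub; simpl. lia.
  - intros l' [w1 [w2 ->]]. unfold in_translate, rect_shape, psub; simpl.
    intros [H1 H2].
    assert (w1 = q). { unfold q. apply Z.div_unique_pos with (x1 - (w1*b + w2*0)); lia. }
    subst w1.
    assert (w2 = u2). { unfold u2. apply Z.div_unique_pos with (x2 - (q*h + w2*a)); lia. }
    subst w2. reflexivity.
Qed.

Lemma fold_gen b a h u v : 0 < b -> 0 < a -> u*h + v*a = 1 ->
  exists p : nat -> pt, is_folded_row (b, h) (0, a) (rect_shape b a) (1, 0) p /\
    forall s : pt, rect_shape b a s -> exists k : nat, p k = s.
Proof.
  intros Hb Ha Huv.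
  exists (fun k => (Z.of_nat k mod b, (-(Z.of_nat k / b) * h) mod a)).
  split; [split|].
  - reflexivity.
  - intros k. rewrite Nat2Z.inj_succ. unfold Z.succ. set (K := Z.of_nat k).
    pose proof (Z.div_mod K b ltac:(lia)) as E1.
    pose proof (Z.mod_pos_bound K b Hb) as B1.
    pose proof (Z.div_mod (K+1) b ltac:(lia)) as E1'.
    pose proof (Z.mod_pos_bound (K+1) b Hb) as B1'.
    set (q := K / b) in *. set (q' := (K+1)/b) in *.
    pose proof (Z.div_mod (-q*h) a ltac:(lia)) as E2.
    pose proof (Z.mod_pos_bound (-q*h) a Ha) as B2.
    pose proof (Z.div_mod (-q'*h) a ltac:(lia)) as E2'.
    pose proof (Z.mod_pos_bound (-q'*h) a Ha) as B2'.
    split.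
    + exists (q' - q), ((-q'*h)/a - (-q*h)/a).
      unfold padd, psub; simpl. f_equal; lia.
    + unfold in_translate, rect_shape, padd, psub; simpl. lia.
  - intros [i j] [Hi Hj]; simpl in Hi, Hj.
    pose proof (Z.div_mod (-(j*u)) a ltac:(lia)) as E.
    pose proof (Z.mod_pos_bound (-(j*u)) a Ha) as B.
    set (q := (-(j*u)) mod a) in *. set (t := (-(j*u)) / a) in *.
    exists (Z.to_nat (q*b + i)).
    rewrite Z2Nat.id by nia.
    assert (Hd : (q*b+i)/b = q) by (symmetry; apply Z.div_unique_pos with i; lia).
    assert (Hm : (q*b+i) mod b = i) by (symmetry; apply Z.mod_unique_pos with q; lia).
    rewrite Hd, Hm. f_equal.
    symmetry. apply Z.mod_unique_pos with (t*h - j*v); [lia|].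
    assert (j*(u*h+v*a) = j) by (rewrite Huv; ring).
    assert (q = -(j*u) - a*t) by lia. subst q.
    nia.
Qed.

Lemma bezout alpha : 2 <= alpha -> Z.Even alpha ->
  exists u v, u * (alpha / 2 + theta alpha) + v * alpha = 1.
Proof.
  intros H2 [m ->].
  destruct (Z.Even_or_Odd m) as [[n ->]|[n ->]].
  - assert (Hd : 2*(2*n)/2 = 2*n) by (rewrite Z.mul_comm, Z.div_mul; lia).
    assert (Ht : theta (2*(2*n)) = 1).
    { unfold theta. replace (2*(2*n)) with (n*4) by ring. rewrite Z.mod_mul by lia. reflexivity. }
    rewrite Hd, Ht. exists (1 - 2*n), n. ring.
  - assert (Hd : 2*(2*n+1)/2 = 2*n+1) by (rewrite Z.mul_comm, Z.div_mul; lia).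
    assert (Ht : theta (2*(2*n+1)) = 2).
    { unfold theta. replace (2*(2*n+1)) with (2 + n*4) by ring.
      rewrite Z_mod_plus_full. reflexivity. }
    rewrite Hd, Ht. destruct (Z.Even_or_Odd n) as [[t ->]|[t ->]].
    + exists (2*t+1), (-(t+1)). ring.
    + exists (6*t+5), (-(3*t+4)). ring.
Qed.

Theorem mainTheorem10 (alpha beta : Z) :
  2 <= alpha -> Z.Even alpha -> 1 <= beta ->
  let v1 := (beta, alpha / 2 + theta alpha) in
  let v2 := (0, alpha) in
  lattice_tiling v1 v2 (rect_shape beta alpha) /\
  defines_folding v1 v2 (rect_shape beta alpha) (1, 0).
Proof.
  intros Ha He Hb v1 v2. subst v1 v2.
  destruct (bezout alpha Ha He) as [u [v Huv]].
  assert (T := tiling_gen beta alpha (alpha / 2 + theta alpha) ltac:(lia) ltac:(lia)).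
  split; [exact T|]. split; [exact T|].
  exact (fold_gen beta alpha _ u v ltac:(lia) ltac:(lia) Huv).
Qed.
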